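(* Let $D\in\mathcal{O}_d$ be a discriminant and let $\epsilon_D=\frac12(t_0+u_0\sqrt{D})$ be a fundamental solution of $t^2-u^2D=4$. For $n\ge 0$ write $\epsilon_D^{\,n+1}=\frac12(t_n+u_n\sqrt{D})$ with $t_n,u_n\in\mathcal{O}_d$. Then for every $n\ge 0$, $$|t_n|^2-3<|\epsilon_D|^{2(n+1)}<|t_n|^2+3.$$
   Context: Let $d>0$ be a square-free rational integer, $k_d=\mathbb{Q}(\sqrt{-d})$, and $\mathcal{O}_d$ its ring of integers. An element $D\in\mathcal{O}_d$ is a discriminant if $D$ is not a perfect square in $\mathcal{O}_d$ and $D\equiv x^2 \pmod{4\mathcal{O}_d}$ for some $x\in\mathcal{O}_d$. The square root $\sqrt{D}$ is chosen with argument in $[0,\pi)$. For a solution $(t,u)\in\mathcal{O}_d^2$ of $t^2-u^2D=4$ set $\epsilon_{t,u}=\frac12(t+u\sqrt{D})$. A solution $(t_0,u_0)$ is fundamental if $|\epsilon_{t_0,u_0}|$ is the smallest value larger than $1$ among all $|\epsilon_{t,u}|$ for solutions $(t,u)$; then one writes $\epsilon_D=\epsilon_{t_0,u_0}$. *)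

(* Defs.v *)
From HB Require Import structures.
From mathcomp Require Import all_boot all_order all_algebra all_field.
Set Implicit Arguments. Unset Strict Implicit. Unset Printing Implicit Defensive.
Import Order.TTheory GRing.Theory Num.Theory.
Local Open Scope ring_scope.

Definition square_free (d : nat) : Prop :=
  (0 < d)%N /\ forall p : nat, prime p -> ~~ (p * p %| d)%N.

(* Generator of the ring of integers O_d of Q(sqrt(-d)):
   (1 + sqrt(-d))/2 if -d = 1 mod 4 (i.e. d = 3 mod 4), sqrt(-d) otherwise. *)
Definition omega (d : nat) : algC :=
  if (d %% 4 == 3)%N then (1 + sqrtC (- d%:R)) / 2 else sqrtC (- d%:R).

Definition inO (d : nat) (z : algC) : Prop :=
  exists a b : int, z = a%:~R + b%:~R * omega d.

Definition is_square_O (d : nat) (D : algC) : Prop :=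
  exists x, inO d x /\ D = x ^+ 2.

Definition discriminant (d : nat) (D : algC) : Prop :=
  [/\ inO d D, ~ is_square_O d D &
      exists x y, [/\ inO d x, inO d y & D = x ^+ 2 + 4 * y]].

(* sqrt D with argument in [0, pi): sqrtC is the 2.-root with minimal
   nonnegative argument. *)
Definition pell_sol (d : nat) (D t u : algC) : Prop :=
  [/\ inO d t, inO d u & t ^+ 2 - u ^+ 2 * D = 4].

Definition eps (D t u : algC) : algC := (t + u * sqrtC D) / 2.

Definition fundamental (d : nat) (D t0 u0 : algC) : Prop :=
  [/\ pell_sol d D t0 u0, 1 < `|eps D t0 u0| &
      forall t u, pell_sol d D t u -> 1 < `|eps D t u| ->
        `|eps D t0 u0| <= `|eps D t u| ].

(* Main.v *)
Require Import Defs.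
From HB Require Import structures.
From mathcomp Require Import all_boot all_order all_algebra all_field.
From mathcomp Require Import ring lra zify.
Import Order.TTheory GRing.Theory Num.Theory.
Local Open Scope ring_scope.

Lemma sqf_dvd (d c g : nat) : square_free d -> (0 < c)%N ->
  (c ^ 2 %| d * g ^ 2)%N -> (c %| g)%N.
Proof.
move=> [d0 sq] c0 H.
have h0 : (0 < gcdn c g)%N by rewrite gcdn_gt0 c0.
set h := gcdn c g in h0 *.
have Ec : c = (c %/ h * h)%N by rewrite divnK // dvdn_gcdl.
have Eg : g = (g %/ h * h)%N by rewrite divnK // dvdn_gcdr.
have cop : coprime (c %/ h) (g %/ h).
  rewrite /coprime -(eqn_pmul2l h0) muln1 muln_gcdr.
  by rewrite [(h * (c %/ h))%N]mulnC -Ec [(h * _)%N]mulnC -Eg.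
move: H; rewrite Ec Eg !expnMn mulnA dvdn_pmul2r ?expn_gt0 ?h0 //.
rewrite Gauss_dvdl; last by rewrite coprimeXl // coprimeXr.
move=> H.
have c1 : (c %/ h = 1)%N.
  have cp0 : (0 < c %/ h)%N by rewrite divn_gt0 // dvdn_leq // dvdn_gcdl.
  case: (ltngtP (c %/ h) 1) => // [|c2]; first by rewrite ltnNge cp0.
  have pp := pdiv_prime c2.
  exfalso; apply: (negP (sq _ pp)); apply: dvdn_trans H.
  by rewrite expnS expn1 dvdn_mul // pdiv_dvd.
by rewrite c1 mul1n -Eg /h dvdn_gcdr.
Qed.

Definition dl (d : nat) : algC := sqrtC (- d%:R).
Lemma dl_sq d : dl d ^+ 2 = - d%:R.
Proof. exact: sqrtCK. Qed.

Lemma dl_indep d (a b : int) : (0 < d)%N ->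
  a%:~R + b%:~R * dl d = 0 -> a = 0 /\ b = 0.
Proof.
move=> d0 H.
have [b0|bn0] := eqVneq b 0.
  by move/eqP: H; rewrite b0 mul0r addr0 intr_eq0 => /eqP.
exfalso.
have bC : (b%:~R : algC) != 0 by rewrite intr_eq0.
have E : dl d = - (a%:~R / b%:~R).
  apply: (mulfI bC); rewrite mulrN mulrCA divff // mulr1.
  by apply/eqP; rewrite -addr_eq0 addrC H.
have rl : dl d \is Num.real by rewrite E rpredN rpred_div // ?realz.
have := real_exprn_even_ge0 (n := 2) rl isT.
rewrite dl_sq oppr_ge0 lern0 => /eqP d00.
by rewrite d00 in d0.
Qed.

Lemma sqfz (d : nat) (C G : int) : square_free d -> C != 0 ->
  (C ^+ 2 %| d%:Z * G ^+ 2)%Z -> (C %| G)%Z.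
Proof.
move=> sq C0; rewrite !dvdzE abszM !abszX /= => H.
by apply: (@sqf_dvd d _ _ sq _ H); rewrite absz_gt0.
Qed.


Lemma nt (d : nat) (E F C p q : int) : square_free d -> C != 0 ->
  2 * (E ^+ 2 - d%:Z * F ^+ 2) = C ^+ 2 * p -> 4 * E * F = C ^+ 2 * q ->
  (C %| 2 * E)%Z /\ (C %| 2 * F)%Z.
Proof.
move=> sq C0 e1 e2.
have h1 : (2 * (E ^+ 2 + d%:Z * F ^+ 2)) ^+ 2 = (C ^+ 2) ^+ 2 * (p ^+ 2 + d%:Z * q ^+ 2).
  have -> : (2 * (E ^+ 2 + d%:Z * F ^+ 2)) ^+ 2 =
    (2 * (E ^+ 2 - d%:Z * F ^+ 2)) ^+ 2 + d%:Z * (4 * E * F) ^+ 2 by ring.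
  rewrite e1 e2; ring.
have h2 : (C ^+ 2 %| 2 * (E ^+ 2 + d%:Z * F ^+ 2))%Z.
  by rewrite -(@dvdz_pexp2r _ _ 2) // h1 dvdz_mulr.
have h3 : (C ^+ 2 %| (2 * E) ^+ 2)%Z.
  have -> : (2 * E) ^+ 2 = 2 * (E ^+ 2 + d%:Z * F ^+ 2) + C ^+ 2 * p.
    by rewrite -e1; ring.
  by rewrite rpredD // dvdz_mulr.
have h4 : (C ^+ 2 %| d%:Z * (2 * F) ^+ 2)%Z.
  have -> : d%:Z * (2 * F) ^+ 2 = 2 * (E ^+ 2 + d%:Z * F ^+ 2) - C ^+ 2 * p.
    by rewrite -e1; ring.
  by rewrite rpredB // dvdz_mulr.
split; last exact: sqfz sq C0 h4.
by rewrite -(@dvdz_pexp2r _ _ 2).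
Qed.


Definition par (d : nat) (a b : int) : Prop :=
  if (d %% 4 == 3)%N then exists k, a - b = 2 * k
  else exists k l, a = 2 * k /\ b = 2 * l.

Lemma int_par (x : int) : exists a, x = 2 * a \/ x = 2 * a + 1.
Proof. exists (x %/ 2)%Z; lia. Qed.

Lemma par_sq (d : nat) (A B p q : int) : (d %% 4 != 0)%N -> par d p q ->
  A * A - d%:Z * B * B = 2 * p -> A * B = q -> par d A B.
Proof.
rewrite /par => d4.
have hd : d%:Z = 4 * (d %/ 4)%N%:Z + (d %% 4)%N%:Z by lia.
move: d4 hd; set m := (d %/ 4)%N.
have : (d %% 4 < 4)%N by rewrite ltn_pmod.
case: (d %% 4)%N => [|[|[|[|r]]]] //= _ _ -> ;
have [a [->|->]] := int_par A; have [b [->|->]] := int_par B;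
first [ move=> [k [l [hk hl]]] e1 e2 | move=> [k hk] e1 e2 ];
first [ (exfalso; lia) | (exists (a - b); lia) | (exists a, b; lia) ].
Qed.


Lemma omega_sq d : exists c1 c2 : int, omega d ^+ 2 = c1%:~R + c2%:~R * omega d.
Proof.
have E : dl d ^+ 2 = - d%:R by exact: dl_sq.
rewrite /omega -/(dl d); case: ifP => h.
- have hd : (d = (d %/ 4) * 4 + 3)%N by rewrite {1}(divn_eq d 4) (eqP h).
  exists (- ((d %/ 4)%N.+1)%:Z), 1; rewrite intrN -pmulrn mul1r.
  have Ed : (d%:R : algC) = (d %/ 4)%N%:R * 4 + 3 by rewrite {1}hd natrD natrM.
  rewrite Ed in E.
  move: E; set x := dl d; set m : algC := (d %/ 4)%N%:R => E.
  rewrite -addn1 natrD -/m.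
  have -> : ((1 + x) / 2) ^+ 2 = (1 + 2 * x + x ^+ 2) / 4 by field.
  by rewrite E; field.
- by exists (- (d%:Z)), 0; rewrite mul0r addr0 intrN -pmulrn.
Qed.


Lemma int2 : ((2 : int)%:~R : algC) = 2. Proof. by []. Qed.
Lemma int4 : ((4 : int)%:~R : algC) = 4. Proof. by []. Qed.
Ltac pushi := rewrite ?(intrD, intrB, intrM, intrN, int2, int4, rmorphXn).

Lemma inO_int d (k : int) : inO d k%:~R.
Proof. by exists k, 0; rewrite mul0r addr0. Qed.

Lemma inO_add d x y : inO d x -> inO d y -> inO d (x + y).
Proof.
move=> [a [b ->]] [a' [b' ->]]; exists (a + a'), (b + b'); pushi; ring.
Qed.

Lemma inO_opp d x : inO d x -> inO d (- x).
Proof. move=> [a [b ->]]; exists (- a), (- b); pushi; ring. Qed.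

Lemma inO_sub d x y : inO d x -> inO d y -> inO d (x - y).
Proof. by move=> hx hy; apply: inO_add => //; apply: inO_opp. Qed.

Lemma inO_mul d x y : inO d x -> inO d y -> inO d (x * y).
Proof.
move=> [a [b ->]] [a' [b' ->]].
have [c1 [c2 Ew]] := omega_sq d.
exists (a * a' + b * b' * c1), (a * b' + a' * b + b * b' * c2).
rewrite (_ : (a%:~R + b%:~R * omega d) * (a'%:~R + b'%:~R * omega d) =
  a%:~R * a'%:~R + (a%:~R * b'%:~R + a'%:~R * b%:~R) * omega d
   + b%:~R * b'%:~R * omega d ^+ 2); last by ring.
rewrite Ew; pushi; ring.
Qed.

Lemma inO_rep d z : inO d z ->
  exists a b : int, z = (a%:~R + b%:~R * dl d) / 2 /\ par d a b.
Proof.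
move=> [x [y ->]]; rewrite /omega /par -/(dl d); case: ifP => h.
- exists (2 * x + y), y; split; last by exists x; lia.
  by pushi; field.
- exists (2 * x), (2 * y); split; last by exists x, y.
  by pushi; field.
Qed.

Lemma rep_inO d (a b : int) : par d a b -> inO d ((a%:~R + b%:~R * dl d) / 2).
Proof.
rewrite /par /inO /omega -/(dl d); case: ifP => h.
- move=> [k hk]; exists k, b.
  have -> : a = 2 * k + b by lia.
  by pushi; field.
- move=> [k [l [-> ->]]]; exists k, l.
  by pushi; field.
Qed.


Lemma d_cast (d : nat) : ((d%:Z)%:~R : algC) = - dl d ^+ 2.
Proof. by rewrite dl_sq opprK. Qed.

Lemma sqf4 d : square_free d -> (d %% 4 != 0)%N.
Proof.
move=> [d0 sq]; apply/negP => /eqP h.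
have : ~~ (2 * 2 %| d)%N by apply: sq.
by rewrite /dvdn h.
Qed.

Lemma uniqO d D s P Q : square_free d -> inO d D -> ~ is_square_O d D ->
  s ^+ 2 = D -> inO d P -> inO d Q -> P + Q * s = 0 -> Q = 0.
Proof.
move=> sq hD nsq hs hP hQ hPQ.
have [//|Qn0] := eqVneq Q 0; exfalso.
have d0 : (0 < d)%N by case: sq.
have [a1 [b1 [EP _]]] := inO_rep _ _ hP.
have [a2 [b2 [EQ _]]] := inO_rep _ _ hQ.
have [p [q [ED pq]]] := inO_rep _ _ hD.
set C : int := a2 * a2 + d%:Z * b2 * b2.
have C0 : C != 0.
  apply/eqP => C0; move: Qn0; rewrite EQ.
  have [-> ->] : a2 = 0 /\ b2 = 0 by rewrite /C in C0; split; nia.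
  by rewrite mul0r addr0 mul0r eqxx.
set E : int := - (a1 * a2 + d%:Z * b1 * b2).
set F : int := a1 * b2 - a2 * b1.
have e0 : s * (a2%:~R + b2%:~R * (dl d)) = - (a1%:~R + b1%:~R * (dl d)).
  apply/eqP; rewrite -subr_eq0 opprK; apply/eqP.
  have -> : s * (a2%:~R + b2%:~R * (dl d)) + (a1%:~R + b1%:~R * (dl d)) = 2 * (P + Q * s).
    by rewrite EP EQ; field.
  by rewrite hPQ mulr0.
have eC : s * C%:~R = E%:~R + F%:~R * (dl d).
  have -> : (C%:~R : algC) = (a2%:~R + b2%:~R * (dl d)) * (a2%:~R - b2%:~R * (dl d)).
    by rewrite /C; pushi; rewrite d_cast; ring.
  rewrite mulrA e0 /E /F; pushi; rewrite d_cast; ring.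
have [X0 Y0] : 2 * (E ^+ 2 - d%:Z * F ^+ 2) - C ^+ 2 * p = 0 /\
               4 * E * F - C ^+ 2 * q = 0.
  apply: (@dl_indep d _ _ d0).
  have -> : (2 * (E ^+ 2 - d%:Z * F ^+ 2) - C ^+ 2 * p)%:~R +
     (4 * E * F - C ^+ 2 * q)%:~R * dl d =
     2 * (E%:~R + F%:~R * (dl d)) ^+ 2 - (C%:~R) ^+ 2 * (2 * D) :> algC.
    by rewrite ED; pushi; rewrite d_cast; field.
  rewrite -eC -hs; ring.
have [hE hF] : (C %| 2 * E)%Z /\ (C %| 2 * F)%Z.
  by apply: (@nt d E F C p q sq C0); lia.
have [A eA] := dvdzP hE.
have [B eB] := dvdzP hF.
have Cn : (C%:~R : algC) != 0 by rewrite intr_eq0.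
have es : s = (A%:~R + B%:~R * (dl d)) / 2.
  apply: (mulIf Cn); rewrite eC.
  apply: (mulIf (x := 2)); first by rewrite pnatr_eq0.
  have -> : (E%:~R + F%:~R * (dl d)) * 2 = (2 * E)%:~R + (2 * F)%:~R * (dl d) :> algC.
    by pushi; ring.
  by rewrite eA eB; pushi; field.
have [X1 Y1] : A * A - d%:Z * B * B - 2 * p = 0 /\ 2 * (A * B - q) = 0.
  apply: (@dl_indep d _ _ d0).
  have -> : (A * A - d%:Z * B * B - 2 * p)%:~R + (2 * (A * B - q))%:~R * dl d =
     4 * s ^+ 2 - 4 * D :> algC.
    by rewrite es ED; pushi; rewrite d_cast; field.
  by rewrite hs subrr.
apply: nsq; exists s; split; last by [].
rewrite es; apply: rep_inO.
apply: (@par_sq d A B p q) => //; first exact: sqf4.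
  lia.
lia.
Qed.


Lemma final_ineq (w w' : algC) : w * w' = 1 -> 1 < `|w| ->
  `|w + w'| ^+ 2 - 3 < `|w| ^+ 2 < `|w + w'| ^+ 2 + 3.
Proof.
move=> ww gt1.
have w0 : w != 0 by apply/eqP => w0; move: ww; rewrite w0 mul0r => /eqP; rewrite eq_sym oner_eq0.
have ew' : w' = w^-1 by rewrite -[w']mul1r -(mulVf w0) -mulrA ww mulr1.
have nw0 : 0 < `|w| by rewrite normr_gt0.
have a1 : `|w'| < 1 by rewrite ew' normrV ?unitfE // invf_lt1.
have a0 : 0 <= `|w'| by [].
have n1 : `|w| * `|w'| = 1 by rewrite -normrM ww normr1.
rewrite -real_ltr_distl; last by rewrite rpredB // rpredX // normr_real.
have -> : `|w| ^+ 2 - `|w + w'| ^+ 2 = - (w * w'^* + w' * w^* + w' * w'^*).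
  by rewrite !normCK rmorphD /=; ring.
rewrite normrN.
apply: (le_lt_trans (ler_normD _ _)).
apply: (le_lt_trans (lerD (ler_normD _ _) (lexx _))).
rewrite !normrM !norm_conjC n1 [`|w'| * `|w|]mulrC n1.
have : `|w'| * `|w'| < 1.
  apply: (le_lt_trans _ a1); rewrite ler_piMr //; exact: ltW.
move=> h; rewrite [X in _ < X](_ : _ = 1 + 1 + 1 :> algC); last by ring.
by rewrite ltrD2l.
Qed.


Theorem proposition3p3 (d : nat) (D t0 u0 : algC) :
  square_free d -> discriminant d D -> fundamental d D t0 u0 ->
  forall (n : nat) (tn un : algC), inO d tn -> inO d un ->
    eps D t0 u0 ^+ n.+1 = eps D tn un ->
    `|tn| ^+ 2 - 3 < `|eps D t0 u0| ^+ (2 * n.+1) < `|tn| ^+ 2 + 3.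
Proof.
move=> sq [hD nsq _] [[ht0 hu0 pell] gt1 _] n tn un htn hun heps.
set s := sqrtC D.
have hs : s ^+ 2 = D by exact: sqrtCK.
have pw : forall k, exists A B, [/\ inO d A, inO d B,
    (t0 + u0 * s) ^+ k = A + B * s & (t0 - u0 * s) ^+ k = A - B * s].
  elim=> [|k [A [B [hA hB e1 e2]]]].
    exists 1, 0; split; rewrite ?expr0 ?mul0r ?addr0 ?subr0 //.
      by have := inO_int d 1.
    by have := inO_int d 0.
  exists (A * t0 + B * u0 * D), (A * u0 + B * t0); split.
  - by apply: inO_add; apply: inO_mul => //; apply: inO_mul.
  - by apply: inO_add; apply: inO_mul.
  - by rewrite exprSr e1 -hs; ring.
  - by rewrite exprSr e2 -hs; ring.
have [A [B [hA hB e1 e2]]] := pw n.+1.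
have h2n : inO d (2 ^+ n).
  elim: n {heps pw e1 e2} => [|m ih]; first by have := inO_int d 1; rewrite expr0.
  by rewrite exprS; apply: inO_mul => //; have := inO_int d 2.
have h1 : A + B * s = 2 ^+ n * tn + 2 ^+ n * un * s.
  rewrite -e1; move: heps; rewrite /eps -/s expr_div_n => /eqP.
  rewrite eqr_div ?mulf_neq0 ?expf_neq0 ?pnatr_eq0 // => /eqP H.
  apply: (mulIf (x := 2)); first by rewrite pnatr_eq0.
  by rewrite H exprS; ring.
have hB' : B - 2 ^+ n * un = 0.
  apply: (@uniqO d D s (A - 2 ^+ n * tn) _ sq hD nsq hs).
  - by apply: inO_sub => //; apply: inO_mul.
  - by apply: inO_sub => //; apply: inO_mul.
  - rewrite (_ : _ + _ = (A + B * s) - (2 ^+ n * tn + 2 ^+ n * un * s)); last by ring.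
    by rewrite h1 subrr.
have eB : B = 2 ^+ n * un by apply/eqP; rewrite -subr_eq0 hB'.
have eA : A = 2 ^+ n * tn by apply: (addIr (B * s)); rewrite h1 eB -mulrA.
set e := eps D t0 u0 in heps gt1 *.
set e' := (t0 - u0 * s) / 2.
have ee : e * e' = 1.
  have -> : e * e' = (t0 ^+ 2 - u0 ^+ 2 * s ^+ 2) / 4 by rewrite /e /eps -/s /e'; field.
  by rewrite hs pell divff // pnatr_eq0.
have n2 : (2 : algC) ^+ n != 0 by rewrite expf_neq0 // pnatr_eq0.
have ew' : e' ^+ n.+1 = (tn - un * s) / 2.
  rewrite /e' expr_div_n e2 eA eB exprS.
  by field.
have etn : tn = e ^+ n.+1 + e' ^+ n.+1.
  by rewrite heps ew' /eps -/s; field.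
rewrite mulnC exprM -[`|e| ^+ n.+1]normrX etn; apply: final_ineq.
  by rewrite -exprMn ee expr1n.
by rewrite normrX exprn_egt1.
Qed.
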